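(* Let $(\mathcal S,\mathcal F,\mu,\prec)$ be an ordered probability space and let $g(x)=\mu\{z\in\mathcal S:z\prec x\}$. Then the set $\{(x,y)\in\mathcal S^2:x\prec y\text{ and }g(x)\ge g(y)\}$ is a $\mu\times\mu$-null set in $\mathcal S^2$.
   Context: An ordered probability space $(\mathcal S,\mathcal F,\mu,\prec)$ is a probability space $(\mathcal S,\mathcal F,\mu)$ equipped with a strict partial order $\prec$ on $\mathcal S$ such that $\{(x,y):x\prec y\}$ belongs to the product $\sigma$-field $\mathcal F\times\mathcal F$. *)

(* Defs.v *)
From HB Require Import structures.
From mathcomp Require Import all_boot all_order all_algebra.
From mathcomp Require Import all_classical all_reals all_analysis.

Set Implicit Arguments.
Unset Strict Implicit.
Unset Printing Implicit Defensive.

Import Order.TTheory GRing.Theory Num.Theory.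
Local Open Scope classical_set_scope.
Local Open Scope ring_scope.

Definition strict_partial_order (T : Type) (lt : T -> T -> Prop) : Prop :=
  (forall x, ~ lt x x) /\ (forall x y z, lt x y -> lt y z -> lt x z).

(* Main.v *)
Require Import Defs.
From HB Require Import structures.
From mathcomp Require Import all_boot all_order all_algebra.
From mathcomp Require Import all_classical all_reals all_analysis.
From mathcomp Require Import measurable_realfun.
Import Order.TTheory GRing.Theory Num.Theory.
Local Open Scope classical_set_scope.
Local Open Scope ring_scope.

Section aux.
Context (d : measure_display) (T : measurableType d) (R : realType)
  (mu : probability T R).

Lemma fubini_y (A : set (T * T)) : measurable A ->
  ((mu \x mu) A = \int[mu]_y (mu \o ysection A) y)%E.
Proof.
move=> mA.
have := indic_fubini_tonelli mu mu mA.
rewrite indic_fubini_tonelli_FE // indic_fubini_tonelli_GE //.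
Qed.

End aux.

Theorem lemma5p3 (d : measure_display) (T : measurableType d) (R : realType)
  (mu : probability T R) (lt : T -> T -> Prop)
  (hlt : strict_partial_order lt)
  (hmeas : measurable [set p : T * T | lt p.1 p.2]) :
  let g := fun x : T => mu [set z | lt z x] in
  ((mu \x mu)%E).-negligible [set p : T * T | lt p.1 p.2 /\ (g p.2 <= g p.1)%E].
Proof.
move=> g.
set L := [set p : T * T | lt p.1 p.2].
have [irr tr] := hlt.
have gE : g = mu \o ysection L.
  apply/funext => x /=; rewrite /g; congr (mu _).
  by apply/seteqP; split => z; rewrite /ysection /= in_setE.
have mlow : forall x, measurable [set z | lt z x].
  move=> x; have := measurable_ysection x hmeas.
  by congr measurable; apply/seteqP; split => z; rewrite /ysection /= in_setE.
have mg : measurable_fun [set: T] (mu \o ysection L).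
  exact: measurable_fun_ysection.
rewrite -gE in mg.
set N := [set p : T * T | lt p.1 p.2 /\ (g p.2 <= g p.1)%E].
have mN : measurable N.
  have := measurable_lee (@measurableT _ (T * T)%type)
    (measurableT_comp mg measurable_snd) (measurableT_comp mg measurable_fst).
  rewrite setTI => h.
  have -> : N = L `&` [set x | ((g \o snd) x <= (g \o fst) x)%E] by [].
  exact: measurableI.
apply/negligibleP => //.
have h := @fubini_y _ _ _ mu _ mN.
apply: (eq_trans h).
rewrite -[RHS](integral0 mu setT).
apply: eq_integral => y _ /=.
set A := ysection N y.
have mA : measurable A := measurable_ysection y mN.
have AE : forall x, A x <-> (lt x y /\ (g y <= g x)%E).
  by move=> x; rewrite /A /ysection /= in_setE.
have mS : measurable [set p : T * T | lt p.2 p.1].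
  have := measurable_swap measurableT hmeas; rewrite setTI; exact.
have key : forall x, A x -> mu (A `&` ~` [set z | lt z x]) = 0.
  move=> x /AE [xy gyx].
  apply/eqP; rewrite -measure_le0.
  have sub : A `&` ~` [set z | lt z x] `<=` [set z | lt z y] `\` [set z | lt z x].
    by move=> z [/AE [zy _] nzx].
  apply: (le_trans (le_measure _ _ _ sub)).
  - by rewrite inE; apply: measurableI => //; exact: measurableC.
  - by rewrite inE; apply: measurableD.
  rewrite measureD //; last first.
    by apply: (le_lt_trans (probability_le1 _ (mlow y))); rewrite ltry.
  rewrite setIidr; last by move=> z zx; exact: tr zx xy.
  by rewrite sube_le0.
set P := A `*` A `&` ~` [set p : T * T | lt p.2 p.1].
set Q := A `*` A `&` ~` L.
have mP : measurable P.
  by apply: measurableI; [exact: measurableX | exact: measurableC].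
have mQ : measurable Q.
  by apply: measurableI; [exact: measurableX | exact: measurableC].
have P0 : (mu \x mu)%E P = 0.
  transitivity (\int[mu]_x (mu \o xsection P) x)%E; first by [].
  rewrite -[RHS](integral0 mu setT); apply: eq_integral => x _ /=.
  have mxs : measurable (xsection P x) := measurable_xsection x mP.
  case: (pselect (A x)) => Ax.
    apply/eqP; rewrite -measure_le0 -(key x Ax); apply: le_measure.
    - by rewrite inE.
    - by rewrite inE; apply: measurableI => //; exact: measurableC.
    by move=> z; rewrite /xsection /= in_setE => -[[/= _ Az] nz].
  apply/eqP; rewrite -measure_le0 -(measure0 mu); apply: le_measure.
  - by rewrite inE.
  - by rewrite inE.
  by move=> z; rewrite /xsection /= in_setE => -[[/= Ax' _] _].
have Q0 : (mu \x mu)%E Q = 0.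
  apply: (eq_trans (@fubini_y _ _ _ mu _ mQ)).
  rewrite -[RHS](integral0 mu setT); apply: eq_integral => z _ /=.
  have mys : measurable (ysection Q z) := measurable_ysection z mQ.
  case: (pselect (A z)) => Az.
    apply/eqP; rewrite -measure_le0 -(key z Az); apply: le_measure.
    - by rewrite inE.
    - by rewrite inE; apply: measurableI => //; exact: measurableC.
    by move=> x; rewrite /ysection /= in_setE => -[[/= Ax _] nx].
  apply/eqP; rewrite -measure_le0 -(measure0 mu); apply: le_measure.
  - by rewrite inE.
  - by rewrite inE.
  by move=> x; rewrite /ysection /= in_setE => -[[/= _ Az'] _].
have cover : A `*` A `<=` P `|` Q.
  move=> [x z] [/= Ax Az].
  case: (pselect (lt z x)) => hzx; [right | left]; split => //.
  by move=> /= hxz; exact: irr z (tr _ _ _ hzx hxz).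
have : (mu A * mu A <= 0)%E.
  rewrite -(product_measure1E mu mu mA mA).
  apply: (le_trans (le_measure _ _ _ cover)).
  - by rewrite inE; exact: measurableX.
  - by rewrite inE; exact: measurableU.
  apply: (le_trans (measureU2 _ mP mQ)).
  have H0 : forall u v : \bar R, u = 0 -> v = 0 -> (u + v <= 0)%E.
    by move=> ? ? -> ->; rewrite adde0.
  exact: H0 P0 Q0.
rewrite le_eqVlt => /orP [|].
  by rewrite mule_eq0 orbb => /eqP.
by rewrite ltNge mule_ge0.
Qed.
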